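(* Let $a,c\in\mathbb{N}$ and $b,d\in\mathbb{Z}$ with $a\neq c$. Then there exists a completely multiplicative function $f:\mathbb{N}\to\mathbb{S}^1$ such that $$\liminf_{n\to\infty}|f(an+b)-f(cn+d)|>0.$$
   Context: $\mathbb{N}=\{1,2,\dots\}$, $\mathbb{S}^1$ the unit circle in $\mathbb{C}$; completely multiplicative means $f(mn)=f(m)f(n)$ for all $m,n$. The expression is considered for $n$ large enough that $an+b,cn+d\ge1$. *)

(* Defs.v *)
From HB Require Import structures.
From mathcomp Require Import all_boot all_order all_algebra.
From mathcomp Require Import complex.
From mathcomp Require Import all_classical all_reals all_analysis.
Set Implicit Arguments. Unset Strict Implicit. Unset Printing Implicit Defensive.
Import Order.TTheory GRing.Theory Num.Theory.
Local Open Scope ring_scope.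

Definition cmod (R : realType) (z : R[i]) : R := ComplexField.Normc.normc z.

Definition unit_circle_valued (R : realType) (f : nat -> R[i]) : Prop :=
  forall n : nat, (0 < n)%N -> cmod (f n) = 1.

Definition completely_multiplicative (R : realType) (f : nat -> R[i]) : Prop :=
  forall m n : nat, (0 < m)%N -> (0 < n)%N -> f (m * n)%N = f m * f n.

(* the sequence n |-> |f(an+b) - f(cn+d)|; the integer arguments are
   converted to nat by absolute value, which agrees with them once
   an+b, cn+d >= 1 (i.e. for n large), so the liminf is unaffected *)
Definition diff_seq (R : realType) (f : nat -> R[i]) (a c : nat) (b d : int)
  (n : nat) : R :=
  cmod (f (absz (a%:Z * n%:Z + b)) - f (absz (c%:Z * n%:Z + d))).

(* Main.v *)
From HB Require Import structures.
From mathcomp Require Import all_boot all_order all_algebra.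
From mathcomp Require Import all_classical all_reals all_analysis.
From mathcomp Require Import ring zify.
From mathcomp Require Import complex.
Require Import Defs.
Import Order.TTheory GRing.Theory Num.Theory numFieldNormedType.Exports.
Local Open Scope ring_scope.
Local Open Scope classical_set_scope.

Section S.
Variable R : realType.
Variable t : R.
Definition ff (n : nat) : R[i] := Complex (cos (t * ln (n%:R : R))) (sin (t * ln (n%:R : R))).

Lemma ff_unit n : cmod (ff n) = 1.
Proof. by rewrite /cmod /ff /= cos2Dsin2 sqrtr1. Qed.

Lemma ff_mul m n : (0 < m)%N -> (0 < n)%N -> ff (m * n) = ff m * ff n.
Proof.
move=> m0 n0; rewrite /ff natrM lnM ?posrE ?ltr0n // mulrDr cosD sinD.
by rewrite [RHS]/GRing.mul /=; congr Complex; exact: addrC.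
Qed.

Lemma ff_diff x y : cmod (ff x - ff y) =
  Num.sqrt (2 - 2 * cos (t * ln (x%:R : R) - t * ln (y%:R : R))).
Proof.
rewrite /cmod /ff /= cosB; congr Num.sqrt.
move: (cos2Dsin2 (t * ln (x%:R : R))) (cos2Dsin2 (t * ln (y%:R : R))).
move: (cos _) (cos _) (sin _) (sin _) => p q r s h1 h2.
transitivity ((p^+2 + r^+2) + (q^+2 + s^+2) - 2 * (p*q + r*s)); first ring.
rewrite h1 h2; ring.
Qed.
End S.
Lemma key (R : realType) (a : nat) (b : int) : (0 < a)%N ->
  (fun n : nat => ln ((absz (a%:Z * n%:Z + b))%:R : R) - ln (n%:R : R)) @ \oo --> ln (a%:R : R).
Proof.
move=> a0; rewrite -cvg_shiftS.
have hh : (fun n => a%:R + b%:~R * harmonic n) @ \oo --> (a%:R : R).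
  rewrite -[X in _ --> X]addr0; apply: cvgD; first exact: cvg_cst.
  rewrite -(mulr0 (b%:~R : R)); apply: cvgM; first exact: cvg_cst.
  exact: cvg_harmonic.
have ha : (0 : R) < a%:R by rewrite ltr0n.
have H := @continuous_cvg _ _ _ _ _ _ _ _ (continuous_ln ha) hh.
eapply cvg_trans; last exact: H.
apply: near_eq_cvg.
exists (absz b) => // n /= hn.
have z0 : (0 < a%:Z * n.+1%:Z + b)%R by nia.
have zR : (0 : R) < (a%:Z * n.+1%:Z + b)%:~R by rewrite ltr0z.
rewrite natr_absz gtr0_norm // -ln_div ?posrE ?ltr0n //.
congr ln; rewrite intrD intrM !pmulrn mulrDl -mulrA divff ?mulr1 // pnatr_eq0 //.
Qed.

Theorem lemma4p1 (R : realType) (a c : nat) (b d : int) :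
  (0 < a)%N -> (0 < c)%N -> a <> c ->
  exists f : nat -> R[i],
    unit_circle_valued f /\ completely_multiplicative f /\
    0 < limn_inf (diff_seq f a c b d).
Proof.
move=> a0 c0 ac.
have ha : (0 : R) < a%:R by rewrite ltr0n.
have hc : (0 : R) < c%:R by rewrite ltr0n.
have lnac : ln (a%:R : R) - ln c%:R != 0.
  rewrite subr_eq0; apply/eqP => /ln_inj.
  move=> /(_ _ _) H; have := H ha hc; move/eqP; rewrite eqr_nat => /eqP; exact: ac.
set t := pi / (ln (a%:R : R) - ln c%:R).
have ht : t * (ln (a%:R : R) - ln c%:R) = pi by rewrite /t mulrVK // unitfE.
exists (@ff R t); split; first by move=> n _; exact: ff_unit.
split; first by move=> m n m0 n0; exact: ff_mul.
set u1 := fun n : nat => ln ((absz (a%:Z * n%:Z + b))%:R : R) - ln (n%:R : R).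
set u2 := fun n : nat => ln ((absz (c%:Z * n%:Z + d))%:R : R) - ln (n%:R : R).
have hs : (fun n => t * (u1 n - u2 n)) @ \oo --> pi.
  rewrite -ht; apply: cvgM; first exact: cvg_cst.
  by apply: cvgB; [exact: key|exact: key].
have hcos := @continuous_cvg _ _ _ _ _ _ _ _ (@continuous_cos R pi) hs.
have h2 : (fun n => 2 - 2 * cos (t * (u1 n - u2 n))) @ \oo --> (2 - 2 * cos pi : R).
  apply: cvgB; first exact: cvg_cst.
  by apply: cvgM; [exact: cvg_cst| exact: hcos].
have hsq := @continuous_cvg _ _ _ _ _ _ _ _ (@sqrt_continuous R _) h2.
have L : diff_seq (@ff R t) a c b d @ \oo --> (2 : R).
  have -> : (2 : R) = Num.sqrt (2 - 2 * cos pi).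
    rewrite cospi mulrN1 opprK -[X in Num.sqrt X](_ : 2 ^+ 2 = _); last by ring.
    by rewrite sqrtr_sqr ger0_norm.
  eapply cvg_trans; last exact: hsq.
  apply: near_eq_cvg; exists 0%N => // n _ /=.
  rewrite /diff_seq ff_diff /u1 /u2; congr (Num.sqrt (_ - _ * cos _)); ring.
by rewrite (cvg_limn_inf_sup L).1.
Qed.
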